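(* Let $n\ge 5$ with $n\equiv 1\pmod 4$, fix $\delta_0>0$, and let $T(a,b)=(n-1)^{n-1}a^n+n^nb^{n-1}$. For positive integers $A,B$ and a squarefree integer $d$, let $R_0(d)$ be the number of pairs $(a,b)\in\mathbb Z^2$ with $A\le |a|\le 2A$, $B\le |b|\le 2B$, $\gcd((n-1)a,nb)=1$ and $T(a,b)=d$. Then there is a constant $C>0$ such that for all sufficiently large $A$ and all $B>A^{1+\delta_0}$, $$\sum_{d\ \text{squarefree}}R_0(d)^2\le C\,AB.$$ *)

(* Defs.v *)
From mathcomp Require Import all_boot all_algebra.
Set Implicit Arguments. Unset Strict Implicit. Unset Printing Implicit Defensive.
Import GRing.Theory Num.Theory.
Local Open Scope ring_scope.

Definition Tval (n : nat) (a b : int) : int :=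
  ((n.-1)%:Z) ^+ (n.-1) * a ^+ n + (n%:Z) ^+ n * b ^+ (n.-1).

Definition irange (A : nat) : seq int :=
  [seq x <- [seq (k%:Z - (2 * A)%:Z) | k <- iota 0 (4 * A).+1]
     | (A <= `|x|)%N && (`|x| <= 2 * A)%N].

Definition good_pairs (n A B : nat) : seq (int * int) :=
  [seq p <- [seq (a, b) | a <- irange A, b <- irange B]
     | gcdz ((n.-1)%:Z * p.1) (n%:Z * p.2) == 1].

Definition R0 (n A B : nat) (d : int) : nat :=
  count (fun p => Tval n p.1 p.2 == d) (good_pairs n A B).

(* d squarefree: d <> 0 and no prime square divides d
   (any prime p with p^2 | d, d <> 0, satisfies p <= |d|) *)
Definition sqfreez (d : int) : bool :=
  (d != 0) && [forall p : 'I_(`|d|.+1), prime p ==> ~~ (p * p %| `|d|)%N].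

(* sum over all squarefree d of R0(d)^2; R0(d) = 0 unless d is a value of T
   on the good pairs, so the sum ranges over those (finitely many) values *)
Definition sum_R0_sq (n A B : nat) : nat :=
  (\sum_(d <- undup [seq Tval n p.1 p.2 | p <- good_pairs n A B] | sqfreez d)
     R0 n A B d ^ 2)%N.

(* Main.v *)
Require Import Defs.
From mathcomp Require Import all_boot all_algebra.
From mathcomp Require Import all_order lra ring zify.
Set Implicit Arguments. Unset Strict Implicit. Unset Printing Implicit Defensive.

Lemma div_split p N : prime p -> 0 < N ->
  size (divisors N) <= (logn p N).+1 * size (divisors (N %/ p ^ logn p N)).
Proof.
move=> pp N0; case: (pfactor_coprime pp N0) => M cpM defN.
have pe0 : 0 < p ^ logn p N by rewrite expn_gt0 prime_gt0.
have -> : N %/ p ^ logn p N = M by rewrite {1}defN mulnK.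
have M0 : 0 < M by move: N0; rewrite defN muln_gt0 => /andP[].
rewrite -(size_iota 0 (logn p N).+1) -(size_allpairs (fun i dd => dd * p ^ i)).
apply: (uniq_leq_size (divisors_uniq N)) => d.
rewrite -dvdn_divisors // => dN.
have d0 : 0 < d by apply: dvdn_gt0 dN.
case: (pfactor_coprime pp d0) => d' cpd defd.
apply/allpairsP; exists (logn p d, d') => /=; split; last by [].
- rewrite -[0 :: _]/(iota 0 (logn p N).+1) mem_iota /= add0n ltnS dvdn_leq_log //.
- rewrite -dvdn_divisors //.
  have : d' %| M * p ^ logn p N by rewrite -defN; apply: dvdn_trans dN; rewrite defd dvdn_mulr.
  by rewrite Gauss_dvdl // coprime_sym coprimeXl // coprime_sym.
Qed.

Lemma leq_pexp2r e m n : m <= n -> m ^ e <= n ^ e.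
Proof. by case: e => [//|e] h; rewrite leq_exp2r. Qed.
Arguments leq_pexp2r e [m n].

Lemma e_bound k e : 0 < k -> (e.+1) ^ k <= k ^ k * 2 ^ e.
Proof.
move=> k0; set t := e %/ k.
have h1 : e.+1 <= k * t.+1 by rewrite mulnC -ltn_divLR.
have h2 : t.+1 <= 2 ^ t by apply: ltn_expl.
have h3 : t * k <= e by apply: leq_trunc_div.
apply: (leq_trans (leq_pexp2r _ h1)).
rewrite expnMn leq_mul2l; apply/orP; right.
apply: (leq_trans (leq_pexp2r _ h2)).
by rewrite -expnM leq_pexp2l.
Qed.

Lemma split_facts p N : prime p -> 0 < N ->
  let M := N %/ p ^ logn p N in
  [/\ 0 < M, M * p ^ logn p N = N, ~~ (p %| M), M %| N &
    (p %| N -> M < N /\ 0 < logn p N)].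
Proof.
move=> pp N0 M.
have pe0 : 0 < p ^ logn p N by rewrite expn_gt0 prime_gt0.
have MN : M * p ^ logn p N = N by rewrite divnK // pfactor_dvdnn.
have M0 : 0 < M by move: N0; rewrite -MN muln_gt0 => /andP[].
split => //.
- case: (pfactor_coprime pp N0) => M' cpM defN.
  have -> : M = M' by rewrite /M {1}defN mulnK.
  by rewrite -prime_coprime.
- by apply: dvdn_div; apply: pfactor_dvdnn.
- move=> pN.
  have l0 : 0 < logn p N by rewrite -pfactor_dvdn // expn1.
  split => //; apply: ltn_Pdiv => //.
  by apply: (leq_trans (prime_gt1 pp)); rewrite -{1}(expn1 p) leq_pexp2l // prime_gt0.
Qed.

Lemma dbound_pos k : 0 < k -> forall j N, 0 < N ->
  (forall p, prime p -> p %| N -> p < 2 ^ k -> p < j) ->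
  size (divisors N) ^ k <= (k ^ k) ^ j * N.
Proof.
move=> k0; elim=> [|j IH].
- elim/ltn_ind => N IHN N0 hN.
  rewrite expn0 mul1n.
  case: (ltngtP N 1) => [|N1|->]; first by rewrite ltnNge N0.
  + have pp := pdiv_prime N1; have pN := pdiv_dvd N.
    set p := pdiv N in pp pN *.
    have pk : 2 ^ k <= p by rewrite leqNgt; apply/negP => /(hN _ pp pN).
    case: (split_facts pp N0) => M0 MN npM MdN /(_ pN) [MltN l0].
    set e := logn p N in MN MltN l0 *; set M := N %/ p ^ e in M0 MN npM MdN MltN *.
    apply: (leq_trans (leq_pexp2r _ (div_split pp N0))).
    rewrite expnMn -[X in _ <= X]MN [X in _ <= X]mulnC leq_mul //.
    * have : e.+1 <= 2 ^ e by apply: ltn_expl.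
      move=> /(leq_pexp2r k) h; apply: (leq_trans h).
      by rewrite -expnM mulnC expnM; apply: leq_pexp2r.
    * have h := IHN M MltN M0; rewrite expn0 mul1n in h; apply: h => q qp qM; apply: hN => //; exact: (dvdn_trans qM MdN).
  + have d1 : size (divisors 1) = 1 by []. by rewrite d1 exp1n.
- move=> N N0 hN.
  have kk : 0 < k ^ k by rewrite expn_gt0 k0.
  case: (boolP [&& prime j, j %| N & j < 2 ^ k]) => [/and3P[pj jN jk] | hc].
  + case: (split_facts pj N0) => M0 MN npM MdN /(_ jN) [MltN l0].
    set e := logn j N in MN MltN l0 *; set M := N %/ j ^ e in M0 MN npM MdN MltN *.
    apply: (leq_trans (leq_pexp2r _ (div_split pj N0))).
    rewrite expnMn expnS -[X in _ <= _ * _ * X]MN.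
    have hM : size (divisors M) ^ k <= (k ^ k) ^ j * M.
      apply: IH => // q qp qM qk.
      have := hN q qp (dvdn_trans qM MdN) qk; rewrite ltnS leq_eqVlt => /orP[/eqP Eq|//].
      by move: npM; rewrite -Eq qM.
    apply: (leq_trans (leq_mul (e_bound e k0) hM)).
    have : 2 ^ e <= j ^ e by apply: leq_pexp2r; apply: prime_gt1.
    move=> h2.
    have -> : k ^ k * 2 ^ e * ((k ^ k) ^ j * M) = (k ^ k * (k ^ k) ^ j * M) * 2 ^ e by ring.
    have -> : k ^ k * (k ^ k) ^ j * (M * j ^ e) = (k ^ k * (k ^ k) ^ j * M) * j ^ e by ring.
    by rewrite leq_mul2l h2 orbT.
  + apply: (leq_trans (IH N N0 _)).
    * move=> q qp qN qk; have := hN q qp qN qk; rewrite ltnS leq_eqVlt => /orP[/eqP Eq|//].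
      by move: hc; rewrite -Eq qp qN qk.
    * by rewrite expnS -mulnA leq_pmull.
Qed.

Lemma dbound k : 0 < k -> exists C, forall N, size (divisors N) ^ k <= C * N.+1.
Proof.
move=> k0; exists ((k ^ k) ^ (2 ^ k)) => [[|N]].
- by rewrite /= exp1n muln1 expn_gt0 expn_gt0 k0.
- apply: leq_trans (@dbound_pos k k0 (2 ^ k) N.+1 (ltn0Sn N) _) _; first by move=> p _ _ ->. by rewrite leq_mul2l leqnSn orbT.
Qed.

Unset Implicit Arguments.
Import Order.TTheory GRing.Theory Num.Theory.
Open Scope ring_scope.

Lemma Fweak m (x y h : int) : 0 <= x -> x <= y -> 0 <= h ->
  (x + h) ^+ m + y ^+ m <= (y + h) ^+ m + x ^+ m.
Proof.
move=> x0 xy h0; elim: m => [|m IH]; first by rewrite !expr0.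
rewrite !exprS.
set a := (x + h) ^+ m in IH *; set b := y ^+ m in IH *;
set c := (y + h) ^+ m in IH *; set d := x ^+ m in IH *.
have y0 : 0 <= y by lra.
have da : d <= a by apply: lerXn2r; rewrite ?nnegrE; lra.
have db : d <= b by apply: lerXn2r; rewrite ?nnegrE; lra.
have d0 : 0 <= d by rewrite exprn_ge0.
have h1 : 0 <= (y + h) * (c + d - a - b) by apply: mulr_ge0; lra.
have h2 : 0 <= (y - x) * (a - d) by apply: mulr_ge0; lra.
have h3 : 0 <= h * (b - d) by apply: mulr_ge0; lra.
nra.
Qed.

Lemma Fstrict m (x y h : int) : 0 <= x -> x < y -> 0 < h -> (1 < m)%N ->
  (x + h) ^+ m + y ^+ m < (y + h) ^+ m + x ^+ m.
Proof.
move=> x0 xy h0; case: m => [|[|m]] // _.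
have IH := Fweak m.+1 x y h x0 (ltW xy) (ltW h0).
rewrite !(exprS _ m.+1).
set a := (x + h) ^+ m.+1 in IH *; set b := y ^+ m.+1 in IH *;
set c := (y + h) ^+ m.+1 in IH *; set d := x ^+ m.+1 in IH *.
have y0 : 0 <= y by lra.
have da : d < a by rewrite ltrXn2r //; lra.
have db : d <= b by apply: lerXn2r; rewrite ?nnegrE; lra.
have h1 : 0 <= (y + h) * (c + d - a - b) by apply: mulr_ge0; lra.
have h2 : 0 < (y - x) * (a - d) by apply: mulr_gt0; lra.
have h3 : 0 <= h * (b - d) by apply: mulr_ge0; lra.
nra.
Qed.

Lemma inj_int m (u v u' v' : int) : (1 < m)%N -> 0 <= u -> 0 <= v -> 0 <= u' -> 0 <= v' ->
  u != v -> u ^+ m - v ^+ m = u' ^+ m - v' ^+ m -> `|u - v| = `|u' - v'| -> u = u' /\ v = v'.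
Proof.
move=> m1.
wlog uv : u v u' v' / u < v.
  move=> W u0 v0 u'0 v'0 nuv E D.
  case: (ltrgtP u v) => [h|h|h]; first by apply: W.
  - have [] := W v u v' u' h v0 u0 v'0 u'0 _ _ _ => //.
    + by rewrite eq_sym.
    + by apply: oppr_inj; rewrite !opprB E.
    + by rewrite distrC D distrC.
  - by move: nuv; rewrite h eqxx.
move=> u0 v0 u'0 v'0 _ E D.
have m0 : (0 < m)%N by apply: ltnW.
have wneg : u ^+ m < v ^+ m by rewrite ltrXn2r // -lt0n.
have u'v' : u' < v'.
  rewrite ltNge; apply/negP => h.
  have : v' ^+ m <= u' ^+ m by apply: lerXn2r; rewrite ?nnegrE.
  lra.
have d1 : `|u - v| = v - u by rewrite distrC gtr0_norm // subr_gt0.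
have d2 : `|u' - v'| = v' - u' by rewrite distrC gtr0_norm // subr_gt0.
rewrite d1 d2 in D.
set d := v - u in D.
have ev : v = u + d by rewrite /d; ring.
have ev' : v' = u' + d by rewrite D; ring.
have d0 : 0 < d by rewrite /d subr_gt0.
suff uu : u = u' by split => //; rewrite ev ev' uu.
case: (ltrgtP u u') => [h|h|//].
- have := Fstrict m u u' d u0 h d0 m1; rewrite -ev -ev'; lra.
- have := Fstrict m u' u d u'0 h d0 m1; rewrite -ev -ev'; lra.
Qed.

Lemma even_abs (x : int) m : ~~ odd m -> x ^+ m = `|x| ^+ m.
Proof.
move=> em; rewrite -normrX ger0_norm //; exact: exprn_even_ge0.
Qed.

Lemma sign_abs (x y : int) : (x < 0) = (y < 0) -> `|x| = `|y| -> x = y.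
Proof.
case: (ltrP x 0) => hx; case: (ltrP y 0) => hy //= _.
- by rewrite !ltr0_norm // => /oppr_inj.
- by rewrite !ger0_norm.
Qed.

Lemma count_off (s : seq int) (K2 c : int) m : uniq s -> K2 != 0 -> c != 0 ->
  (1 < m)%N -> ~~ odd m ->
  (count (fun q : int * int => (K2 * (q.1 ^+ m - q.2 ^+ m) == c)%R)
     [seq (x, y) | x <- s, y <- s] <= 4 * size (divisors `|c|%N))%N.
Proof.
move=> us K0 c0 m1 em.
rewrite -size_filter.
set S := filter _ _.
pose f (q : int * int) := (q.1 < 0, q.2 < 0, absz (`|q.1| - `|q.2|)%R).
pose L := [seq (b, h) | b <- [:: (true, true); (true, false); (false, true); (false, false)],
                        h <- divisors `|c|%N].
have -> : (4 * size (divisors `|c|%N) = size L)%N by rewrite size_allpairs.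
have uS : uniq S.
  apply: filter_uniq; apply: allpairs_uniq => // [[x y]] [x' y'] _ _ /= [-> ->] //.
have key : forall q, q \in S -> K2 * (`|q.1| ^+ m - `|q.2| ^+ m) = c.
  move=> q; rewrite mem_filter => /andP[/eqP <- _].
  by rewrite -!even_abs.
rewrite -(size_map f); apply: uniq_leq_size.
- rewrite map_inj_in_uniq // => q q' qS q'S /= [e1 e2 e3].
  have k1 := key q qS; have k2 := key q' q'S.
  have E : `|q.1| ^+ m - `|q.2| ^+ m = `|q'.1| ^+ m - `|q'.2| ^+ m.
    by apply: (mulfI K0); rewrite k1 k2.
  have ne : `|q.1| != `|q.2|.
    by apply/negP => /eqP h; move: c0; rewrite -k1 h subrr mulr0 eqxx.
  have D : Num.norm (`|q.1| - `|q.2|) = Num.norm (`|q'.1| - `|q'.2|) by rewrite -!abszE e3.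
  have [a1 a2] := @inj_int m _ _ _ _ m1 (normr_ge0 _) (normr_ge0 _) (normr_ge0 _) (normr_ge0 _) ne E D.
  case: q q' {qS q'S k1 k2 E ne D} e1 e2 e3 a1 a2 => [x y] [x' y'] /= e1 e2 e3 a1 a2.
  by rewrite (@sign_abs x x' e1 a1) (@sign_abs y y' e2 a2).
- move=> z /mapP [q qS ->].
  apply/allpairsP; exists ((q.1 < 0, q.2 < 0), absz (`|q.1| - `|q.2|)%R) => /=; split => //.
  + by case: (q.1 < 0); case: (q.2 < 0).
  + rewrite -dvdn_divisors ?absz_gt0 //.
    rewrite -(key q qS) subrXX.
    change (`|q.1| - `|q.2| %| K2 * ((`|q.1| - `|q.2|) * (\sum_(i < m) `|q.1| ^+ (m.-1 - i) * `|q.2| ^+ i)))%Z.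
    by apply: dvdz_mull; apply: dvdz_mulr; apply: dvdzz.
Qed.

Lemma count_diag (s : seq int) m (b : int) : uniq s -> (0 < m)%N -> ~~ odd m ->
  (count (fun b' => (b' ^+ m == b ^+ m)%R) s <= 2)%N.
Proof.
move=> us m0 em.
apply: (leq_trans (sub_count (a2 := predU (pred1 b) (pred1 (- b))) _ s)).
- move=> x /=; rewrite (even_abs x m em) (even_abs b m em) eqrXn2 ?normr_ge0 //.
  by rewrite eqr_norm2.
- rewrite -(leq_add2r (count (predI (pred1 b) (pred1 (- b))) s)) count_predUI.
  have h1 : (count (pred1 b) s <= 1)%N by rewrite count_uniq_mem // leq_b1.
  have h2 : (count (pred1 (- b)) s <= 1)%N by rewrite count_uniq_mem // leq_b1.
  exact: leq_trans (leq_add h1 h2) (leq_addr _ _).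
Qed.

Lemma irange_uniq A : uniq (irange A).
Proof.
apply: filter_uniq; rewrite map_inj_uniq ?iota_uniq // => x y /addIr.
by move/eqP; rewrite eqz_nat => /eqP.
Qed.

Lemma irange_size A : (size (irange A) <= (4 * A).+1)%N.
Proof.
by rewrite /irange size_filter; apply: leq_trans (count_size _ _) _; rewrite size_map size_iota.
Qed.

Lemma irange_abs A x : x \in irange A -> (`|x| <= 2 * A)%N.
Proof. by rewrite mem_filter => /andP[/andP[_ ->]]. Qed.

Lemma count_allpairs (T1 T2 : Type) (s : seq T1) (t : seq T2) (pr : pred (T1 * T2)) :
  count pr [seq (x, y) | x <- s, y <- t] = (\sum_(x <- s) count (fun y => pr (x, y)) t)%N.
Proof.
elim: s => [|x s IH]; first by rewrite big_nil.
by rewrite big_cons /= count_cat count_map IH.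
Qed.

Lemma sum_red n A B : (sum_R0_sq n A B <=
  \sum_(a <- irange A) \sum_(a' <- irange A) \sum_(b <- irange B)
     count (fun b' => Tval n a' b' == Tval n a b) (irange B))%N.
Proof.
rewrite /sum_R0_sq.
set G := good_pairs n A B.
set U := undup _.
set P := [seq (a, b) | a <- irange A, b <- irange B].
have step1 : (\sum_(d <- U | sqfreez d) R0 n A B d ^ 2 <= \sum_(d <- U) R0 n A B d ^ 2)%N.
  rewrite big_mkcond /=; apply: leq_sum => d _; by case: ifP.
apply: leq_trans step1 _.
have step2 : (\sum_(d <- U) R0 n A B d ^ 2 = \sum_(p <- G) R0 n A B (Tval n p.1 p.2))%N.
  have E : forall p, p \in G -> R0 n A B (Tval n p.1 p.2) =
      (\sum_(d <- U) (Tval n p.1 p.2 == d) * R0 n A B d)%N.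
    move=> p pG; rewrite (bigD1_seq (Tval n p.1 p.2)) ?undup_uniq //=.
    + rewrite eqxx mul1n big1 ?addn0 // => d /negPf; rewrite eq_sym => ->; by [].
    + by rewrite mem_undup; apply/mapP; exists p.
  rewrite (eq_big_seq _ E) exchange_big /=; apply: eq_bigr => d _.
  rewrite expnS expn1 -big_distrl /= mulnC; congr (_ * _)%N.
  rewrite /R0 -/G -sum1_count big_mkcond /=; apply: eq_bigr => p _; by case: eqP.
rewrite step2.
have step3 : (\sum_(p <- G) R0 n A B (Tval n p.1 p.2) <=
   \sum_(p <- P) count (fun q => Tval n q.1 q.2 == Tval n p.1 p.2) P)%N.
  rewrite /G /good_pairs big_filter big_mkcond /=; apply: leq_sum => p _.
  case: ifP => // _; rewrite /R0 /good_pairs count_filter.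
  by apply: sub_count => q /= /andP[].
apply: leq_trans step3 _.
rewrite /P big_allpairs /=; apply: leq_sum => a _.
under eq_bigr => b _ do rewrite count_allpairs.
by rewrite exchange_big /=.
Qed.

Lemma odd_inj (x y : int) n : odd n -> x ^+ n = y ^+ n -> x = y.
Proof.
move=> on E.
have n0 : (0 < n)%N by case: n on E.
have : `|x| == `|y| by rewrite -(eqrXn2 n0) ?normr_ge0 // -!normrX E.
rewrite eqr_norm2 => /orP[/eqP //|/eqP xy].
move: E; rewrite xy exprNn -signr_odd on expr1 mulN1r => E.
have : y ^+ n == 0 by apply/eqP; lra.
rewrite expf_eq0 => /andP[_ /eqP y0].
by rewrite y0 oppr0.
Qed.

Lemma W_bound n B (a a' : int) : (5 <= n)%N -> odd n ->
  (\sum_(b <- irange B) count (fun b' => Tval n a' b' == Tval n a b) (irange B) <=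
   if a == a' then 2 * size (irange B)
   else 4 * size (divisors `|((n.-1)%:Z ^+ n.-1 * (a' ^+ n - a ^+ n))%R|%N))%N.
Proof.
move=> n5 on.
have em : ~~ odd n.-1 by case: n n5 on => // n' _ /=; rewrite negbK.
have m1 : (1 < n.-1)%N by move: n5; clear; case: n => // n' h; rewrite /=; lia.
have K2 : (n%:Z ^+ n != 0) by rewrite expf_eq0 negb_and; apply/orP; right; rewrite eqz_nat; lia.
have K1 : ((n.-1)%:Z ^+ n.-1 != 0) by rewrite expf_eq0 negb_and; apply/orP; right; rewrite eqz_nat; lia.
case: eqP => [<-|ne].
- apply: (@leq_trans (\sum_(b <- irange B) 2)%N); last first.
    by rewrite big_const_seq iter_addn_0 count_predT mulnC.
  apply: leq_sum => b _.
  have := count_diag (irange B) n.-1 b (irange_uniq B) (ltnW m1) em.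
  congr (_ <= _)%N; apply: eq_count => b' /=.
  rewrite /Tval; apply/eqP/eqP => h.
  + by rewrite h.
  + by apply: (mulfI K2); apply: (addrI ((n.-1)%:Z ^+ n.-1 * a ^+ n)).
- set c := _ * _.
  have c0 : c != 0.
    rewrite mulf_neq0 // subr_eq0; apply/negP => /eqP /(odd_inj _ _ _ on) h.
    by apply: ne; rewrite h.
  have := count_off (irange B) _ c _ (irange_uniq B) K2 c0 m1 em.
  rewrite count_allpairs; congr (_ <= _)%N; apply: eq_bigr => b _.
  apply: eq_count => b' /=; rewrite /Tval /c.
  apply/eqP/eqP => h; lra.
Qed.

Definition cval n (a a' : int) : int := (n.-1)%:Z ^+ n.-1 * (a' ^+ n - a ^+ n).
Definition Dm n A : nat :=
  (\max_(a <- irange A) \max_(a' <- irange A) size (divisors `|cval n a a'|%N))%N.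

Lemma sum_ite (s : seq int) (a : int) (F : int -> nat) X Y : uniq s ->
  (forall x, x \in s -> a != x -> F x <= Y)%N ->
  (\sum_(x <- s) (if a == x then X else F x) <= X + size s * Y)%N.
Proof.
move=> us hF.
rewrite (bigID (fun x => a == x)) /=; apply: leq_add.
- apply: (@leq_trans (\sum_(x <- s | a == x) X)%N).
    by apply: leq_sum => x ->.
  rewrite big_const_seq iter_addn_0 mulnC.
  have : (count (fun x => a == x) s <= 1)%N.
    have -> : count (fun x => a == x) s = count (pred1 a) s.
      by apply: eq_count => x /=; rewrite eq_sym.
    by rewrite count_uniq_mem // leq_b1.
  move=> h; apply: leq_trans (leq_mul h (leqnn X)) _; by rewrite mul1n.
- rewrite (big_seq_cond (fun x => a != x)).
  apply: (@leq_trans (\sum_(x <- s | (x \in s) && (a != x)) Y)%N).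
    by apply: leq_sum => x /andP[xs nx]; rewrite (negPf nx); apply: hF.
  rewrite big_const_seq iter_addn_0 mulnC leq_mul2r; apply/orP; right.
  exact: count_size.
Qed.

Lemma main_count n A B : (5 <= n)%N -> odd n ->
  (sum_R0_sq n A B <= (4 * A).+1 * (2 * (4 * B).+1 + (4 * A).+1 * (4 * Dm n A)))%N.
Proof.
move=> n5 on.
apply: leq_trans (sum_red n A B) _.
rewrite big_seq.
apply: (@leq_trans (\sum_(a <- irange A | a \in irange A)
           (2 * (4 * B).+1 + (4 * A).+1 * (4 * Dm n A)))%N); last first.
  rewrite big_const_seq iter_addn_0 mulnC leq_mul2r; apply/orP; right.
  exact: leq_trans (count_size _ _) (irange_size A).
apply: leq_sum => a aA.
apply: (@leq_trans (\sum_(a' <- irange A) (if a == a' then 2 * size (irange B)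
     else 4 * size (divisors `|cval n a a'|%N)))%N).
  by apply: leq_sum => a' _; apply: W_bound.
apply: leq_trans (sum_ite (irange A) a (fun a' => 4 * size (divisors `|cval n a a'|%N))%N
   (2 * size (irange B)) (4 * Dm n A) (irange_uniq A) _) _.
- move=> a' a'A _; rewrite leq_mul2l; apply/orP; right.
  rewrite /Dm.
  apply: leq_trans (leq_bigmax_seq (F := fun a => \max_(a' <- irange A) size (divisors `|cval n a a'|%N)) _ aA isT).
  exact: (leq_bigmax_seq (F := fun a' => size (divisors `|cval n a a'|%N)) _ a'A isT).
- apply: leq_add; first by rewrite leq_mul2l irange_size orbT.
  by rewrite leq_mul2r irange_size orbT.
Qed.

Lemma PoszX (m k : nat) : Posz (m ^ k) = (Posz m) ^+ k.
Proof. by elim: k => [|k IH] //; rewrite expnS exprS PoszM IH. Qed.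

Lemma cval_bound n A a a' : a \in irange A -> a' \in irange A ->
  (`|cval n a a'| <= 2 * ((n.-1) ^ (n.-1) * (2 * A) ^ n))%N.
Proof.
move=> aA a'A.
rewrite -lez_nat abszE /cval normrM ger0_norm ?exprn_ge0 //.
have ha : `|a| ^+ n <= ((2 * A)%N%:Z) ^+ n.
  by apply: lerXn2r; rewrite ?nnegrE // -abszE lez_nat irange_abs.
have ha' : `|a'| ^+ n <= ((2 * A)%N%:Z) ^+ n.
  by apply: lerXn2r; rewrite ?nnegrE // -abszE lez_nat irange_abs.
have hn : `|a' ^+ n - a ^+ n| <= `|a'| ^+ n + `|a| ^+ n.
  by rewrite -!normrX; apply: ler_normB.
have -> : ((2 * ((n.-1) ^ (n.-1) * (2 * A) ^ n))%N : int)
   = (n.-1)%:Z ^+ n.-1 * ((2 * A)%N%:Z ^+ n + (2 * A)%N%:Z ^+ n).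
  by rewrite !PoszM !PoszX PoszM; ring.
apply: ler_wpM2l; first by rewrite exprn_ge0.
apply: le_trans hn _; exact: lerD.
Qed.

Lemma Dm_pow n k C1 A : (0 < k)%N ->
  (forall N, size (divisors N) ^ k <= C1 * N.+1)%N ->
  (Dm n A ^ k <= C1 * (2 * ((n.-1) ^ (n.-1) * (2 * A) ^ n)).+1)%N.
Proof.
move=> k0 hC.
set Bd := (C1 * _)%N.
have P0 : (0 ^ k <= Bd)%N by rewrite exp0n.
have Pmax : forall x y, (x ^ k <= Bd)%N -> (y ^ k <= Bd)%N -> (maxn x y ^ k <= Bd)%N.
  by move=> x y hx hy; case: (leqP x y) => h; rewrite ?(maxn_idPr h) ?(maxn_idPl (ltnW h)).
rewrite /Dm big_seq; apply: (big_ind (fun x => x ^ k <= Bd)%N) => // a aA.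
rewrite big_seq; apply: (big_ind (fun x => x ^ k <= Bd)%N) => // a' a'A.
apply: leq_trans (hC _) _; rewrite leq_mul2l ltnS cval_bound ?orbT //.
Qed.

Close Scope ring_scope.

From Stdlib Require Import Reals.
From Stdlib Require Lra.
Local Open Scope R_scope.

Lemma INR_muln (m k : nat) : INR (muln m k) = INR m * INR k.
Proof. exact: mult_INR. Qed.
Lemma INR_addn (m k : nat) : INR (addn m k) = INR m + INR k.
Proof. exact: plus_INR. Qed.
Lemma INR_expn (m k : nat) : INR (expn m k) = INR m ^ k.
Proof. elim: k => [|k IH] //; rewrite expnS INR_muln IH; reflexivity. Qed.
Lemma INR_le (m k : nat) : leq m k -> INR m <= INR k.
Proof. move/ssrnat.leP; apply: le_INR. Qed.

Lemma real_D (D C2 A n k : nat) (d : R) : (0 < k)%nat -> (0 < A)%nat -> (0 < C2)%nat ->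
  INR n <= INR k * d -> leq (expn D k) (muln C2 (expn A n)) ->
  INR D <= Rpower (INR C2) (/ INR k) * Rpower (INR A) d.
Proof.
move=> k0 A0 C0 hk hD.
have kR : 0 < INR k by apply: lt_0_INR; apply/ssrnat.ltP.
have AR : 1 <= INR A by exact: (INR_le 1 A A0).
have CR : 0 < INR C2 by apply: lt_0_INR; apply/ssrnat.ltP.
case: (posnP D) => [->|D0].
  rewrite /= ; apply: Rmult_le_pos; apply: Rlt_le; apply: exp_pos.
have DR : 0 < INR D by apply: lt_0_INR; apply/ssrnat.ltP.
have e1 : INR D = Rpower (INR D ^ k) (/ INR k).
  by rewrite -Rpower_pow // Rpower_mult Rinv_r ?Rpower_1 //; Lra.lra.
have hD' : INR D ^ k <= INR C2 * INR A ^ n.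
  by rewrite -INR_expn -INR_expn -INR_muln; apply: INR_le; exact: hD.
rewrite e1.
apply: Rle_trans (Rle_Rpower_l _ _ _ _ _) _.
- by apply: Rlt_le; apply: Rinv_0_lt_compat.
- split; first by apply: pow_lt. exact: hD'.
rewrite -Rpower_mult_distr //; last by apply: pow_lt; Lra.lra.
apply: Rmult_le_compat_l; first by apply: Rlt_le; apply: exp_pos.
rewrite -Rpower_pow; last by Lra.lra.
rewrite Rpower_mult; apply: Rle_Rpower => //.
apply: (Rmult_le_reg_r (INR k)) => //.
rewrite Rmult_assoc Rinv_l; Lra.lra.
Qed.

Theorem lemma5 (n : nat) (delta0 : R) :
  leq 5 n -> modn n 4 = 1%nat -> 0 < delta0 ->
  exists C : R, 0 < C /\
  exists A0 : nat, forall A B : nat, leq A0 A -> leq 1 A -> leq 1 B ->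
    INR B > Rpower (INR A) (1 + delta0) ->
    INR (sum_R0_sq n A B) <= C * INR A * INR B.
Proof.
move=> n5 n4 d0.
have on : odd n by rewrite (divn_eq n 4) n4 oddD oddM andbF.
have [k0 hk0] := INR_archimed delta0 (INR n) d0.
pose k := k0.+1.
have k0pos : (0 < k)%nat by [].
have hk : INR n <= INR k * delta0.
  rewrite /k S_INR Rmult_plus_distr_r; Lra.lra.
have [C1 hC1] := dbound k0pos.
pose C2 := (muln C1 (muln (muln 2 (expn n.-1 n.-1)) (expn 2 n)).+1).+1.
have hDm : forall A, leq 1 A -> leq (expn (Dm n A) k) (muln C2 (expn A n)).
  move=> A A0; apply: leq_trans (Dm_pow n k C1 A k0pos hC1) _.
  rewrite expnMn /C2.
  have : leq 1 (expn A n) by rewrite expn_gt0 A0.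
  nia.
pose C3 := Rpower (INR C2) (/ INR k).
have C3pos : 0 < C3 by apply: exp_pos.
exists (50 + 100 * C3); split; first by Lra.lra.
exists 1%nat => A B _ A1 B1 hB.
have hs := main_count n A B n5 on.
have hD := real_D (Dm n A) C2 A n k delta0 k0pos A1 (ltn0Sn _) hk (hDm A A1).
rewrite -/C3 in hD.
have aR : 1 <= INR A by exact: (INR_le 1 A A1).
have bR : 1 <= INR B by exact: (INR_le 1 B B1).
rewrite Rpower_plus Rpower_1 in hB; last by Lra.lra.
move: hD hB; set P := Rpower (INR A) delta0 => hD hB.
have P0 : 0 < P by apply: exp_pos.
have hsR := INR_le _ _ hs.
rewrite !(INR_muln, INR_addn, S_INR) in hsR.
have e2 : INR 2 = 2 by simpl; Lra.lra.
have e4 : INR 4 = 4 by simpl; Lra.lra.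
rewrite ?INR_0 in hsR.
set a := INR A in aR hsR hB hD *; set b := INR B in bR hsR hB *.
set dd := INR (Dm n A) in hsR hD *.
have dd0 : 0 <= dd by apply: pos_INR.
have h1 : 4 * a + 1 <= 5 * a by Lra.lra.
have h3 : (4 * a + 1) * (4 * dd) <= (5 * a) * (4 * (C3 * P)).
  apply: Rmult_le_compat; Lra.lra.
have h4 : (5 * a) * (4 * (C3 * P)) <= 20 * C3 * b.
  have : a * P <= b by Lra.lra.
  move=> h; have := Rmult_le_compat_l (20 * C3) _ _ (ltac:(Lra.lra)) h; Lra.lra.
have h5 : 2 * (4 * b + 1) + (4 * a + 1) * (4 * dd) <= b * (10 + 20 * C3) by Lra.lra.
have h6 : (4 * a + 1) * (2 * (4 * b + 1) + (4 * a + 1) * (4 * dd)) <= (5 * a) * (b * (10 + 20 * C3)).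
  apply: Rmult_le_compat => //; try Lra.lra.
  apply: Rplus_le_le_0_compat; first by Lra.lra.
  apply: Rmult_le_pos; Lra.lra.
Lra.lra.
Qed.
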